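(* Every scattered polynomial $h(x)\in\mathbb{F}_{q^n}[x]$ in standard form is bijective as a map $\mathbb{F}_{q^n}\to\mathbb{F}_{q^n}$.
   Context: $q$ is a prime power, $n>1$. A $q$-polynomial $h(x)=\sum_{i=0}^{n-1}b_ix^{q^i}\in\mathbb{F}_{q^n}[x]$ is scattered if for all $y,z\in\mathbb{F}_{q^n}$, $zh(y)-yh(z)=0$ implies $y,z$ are $\mathbb{F}_q$-linearly dependent. Let $\Delta_h=\{(i-j)\bmod n\colon b_ib_j\neq0,\ i\neq j\}\cup\{n\}$ and $t_h=\gcd(\Delta_h)$; $h$ is in standard form if $t_h>1$. *)

(* Defs.v *)
From HB Require Import structures.
From mathcomp Require Import all_boot all_order all_algebra all_field.
Set Implicit Arguments. Unset Strict Implicit. Unset Printing Implicit Defensive.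
Import GRing.Theory.
Local Open Scope ring_scope.

Definition prime_power (q : nat) : Prop :=
  exists p k : nat, prime p /\ (0 < k)%N /\ q = (p ^ k)%N.

(* membership in the subfield F_q of F (elements fixed by x |-> x^q) *)
Definition in_Fq {F : finFieldType} (q : nat) (x : F) : bool := x ^+ q == x.

Definition qlin_eval {F : finFieldType} (q n : nat) (b : 'I_n -> F) (x : F) : F :=
  \sum_(i < n) b i * x ^+ (q ^ i).

Definition Fq_dependent {F : finFieldType} (q : nat) (y z : F) : Prop :=
  exists a c : F, [/\ in_Fq q a, in_Fq q c, (a != 0) || (c != 0) & a * y + c * z = 0].

Definition scattered {F : finFieldType} (q n : nat) (b : 'I_n -> F) : Prop :=
  forall y z : F, z * qlin_eval q b y - y * qlin_eval q b z = 0 -> Fq_dependent q y z.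

Definition t_h {F : finFieldType} (n : nat) (b : 'I_n -> F) : nat :=
  gcdn n (\big[gcdn/0%N]_(ij : 'I_n * 'I_n | (ij.1 != ij.2) && (b ij.1 * b ij.2 != 0))
            ((ij.1 + n - ij.2) %% n)%N).

Definition standard_form {F : finFieldType} (n : nat) (b : 'I_n -> F) : Prop :=
  (1 < t_h b)%N.

(* Main.v *)
Require Import Defs.
From mathcomp Require Import all_boot all_order all_algebra all_field.
From mathcomp Require Import all_solvable.
Import GRing.Theory.
Local Open Scope ring_scope.
Set Implicit Arguments. Unset Strict Implicit.

Section Aux.
Variables (F : finFieldType) (q n : nat) (b : 'I_n -> F).

Lemma pow_mod (t : nat) (l : F) : l ^+ (q ^ t) = l ->
  forall i, l ^+ (q ^ i) = l ^+ (q ^ (i %% t)).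
Proof.
move=> hl i.
have key : forall m r, l ^+ (q ^ (t * m + r)) = l ^+ (q ^ r).
  elim=> [|m IH] r; first by rewrite muln0 add0n.
  by rewrite mulnS -addnA expnD exprM hl IH.
by rewrite {1}(divn_eq i t) mulnC key.
Qed.

Lemma semilin (t : nat) (l : F) : l ^+ (q ^ t) = l ->
  (forall i j : 'I_n, b i != 0 -> b j != 0 -> (i %% t = j %% t)%N) ->
  forall y, qlin_eval q b y = 0 -> qlin_eval q b (l * y) = 0.
Proof.
move=> hl ht y hy; rewrite /qlin_eval.
case: (pickP (fun i => b i != 0)) => [s hs|hn]; last first.
  by apply: big1 => i _; move/negbFE/eqP: (hn i) => ->; rewrite mul0r.
transitivity (l ^+ (q ^ s) * qlin_eval q b y); last by rewrite hy mulr0.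
rewrite /qlin_eval mulr_sumr; apply: eq_bigr => i _.
have [->|bi] := eqVneq (b i) 0; first by rewrite !mul0r mulr0.
rewrite exprMn (pow_mod hl i) (ht i s bi hs) -(pow_mod hl s).
by rewrite mulrCA mulrA.
Qed.

End Aux.

Theorem theorem4p5 (F : finFieldType) (q n : nat) (b : 'I_n -> F) :
  prime_power q -> (1 < n)%N -> #|F| = (q ^ n)%N ->
  scattered q b -> standard_form b ->
  bijective (qlin_eval q b).
Proof.
move=> [p [k [pp [k0 qE]]]] n1 cardF sc sf.
have q1 : (1 < q)%N by rewrite qE -{1}(expn0 p) ltn_exp2l // prime_gt1.
have pch : p \in [pchar F].
  by apply: (@card_finPcharP _ p (k * n)) => //; rewrite expnM -qE.
have frobD : forall i (x y : F), (x + y) ^+ (q ^ i) = x ^+ (q ^ i) + y ^+ (q ^ i).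
  move=> i x y; apply: exprDn_pchar.
  by rewrite qE -expnM pnatX pnatE // pch.
have frobN : forall i (x : F), (- x) ^+ (q ^ i) = - x ^+ (q ^ i).
  move=> i x; apply/eqP; rewrite -subr_eq0 opprK -frobD addNr expr0n.
  by rewrite expn_eq0 (gtn_eqF (ltnW q1)).
have frobB : forall i (x y : F), (x - y) ^+ (q ^ i) = x ^+ (q ^ i) - y ^+ (q ^ i).
  by move=> i x y; rewrite frobD frobN.
have hB : forall x y, qlin_eval q b (x - y) = qlin_eval q b x - qlin_eval q b y.
  move=> x y; rewrite /qlin_eval -sumrB; apply: eq_bigr => i _.
  by rewrite frobB mulrBr.
set t := t_h b.
have tn : (t %| n)%N by rewrite /t /t_h dvdn_gcdl.
have ht : forall i j : 'I_n, b i != 0 -> b j != 0 -> (i %% t = j %% t)%N.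
  move=> i j bi bj.
  have [->//|ij] := eqVneq i j.
  have : (t %| (i + n - j) %% n)%N.
    have := dvdn_gcdr n (\big[gcdn/0%N]_(ij : 'I_n * 'I_n | (ij.1 != ij.2) && (b ij.1 * b ij.2 != 0))
            ((ij.1 + n - ij.2) %% n)%N).
    rewrite -/(t_h b) -/t => /dvdn_biggcdP/(_ (i, j)) /=; apply.
    by rewrite ij mulf_neq0.
  rewrite /dvdn (modn_dvdm _ tn) -/(dvdn _ _) -eqn_mod_dvd; last first.
    by apply: leq_trans (ltnW (ltn_ord j)) (leq_addl _ _).
  by rewrite -modnDmr (eqP tn) addn0 => /eqP.
have t1 : (1 < t)%N by [].
have [l hlt hlq] : exists2 l : F, l ^+ (q ^ t) = l & l ^+ q != l.
  set N := (q ^ n).-1.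
  have qn0 : (0 < q ^ n)%N by rewrite expn_gt0 ltnW.
  have N0 : (0 < N)%N.
    by rewrite /N -subn1 subn_gt0 -{1}(expn0 q) ltn_exp2l // ltnW.
  have rsU : all N.-unity_root (enum (predC1 (0 : F))).
    apply/allP => x; rewrite mem_enum /= => x0.
    rewrite unity_rootE; apply/eqP; apply: (mulfI x0); rewrite mulr1 -exprS.
    by rewrite /N prednK // -cardF expf_card.
  have := has_prim_root N0 rsU (enum_uniq _).
  rewrite -cardE cardC1 cardF leqnn => /(_ isT) /hasP [z _ zp].
  have dvd1 : (q ^ t - 1 %| N)%N.
    rewrite /N -subn1 -(divnK tn) mulnC expnM -{2}(exp1n (n %/ t)) subn_exp.
    exact: dvdn_mulr.
  set d := (N %/ (q ^ t - 1))%N.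
  have dE : (d * (q ^ t - 1))%N = N by rewrite /d divnK.
  have qtq : (q < q ^ t)%N by rewrite -{1}(expn1 q) ltn_exp2l.
  exists (z ^+ d).
    rewrite -exprM -(subnK (leq_trans (ltnW q1) (ltnW qtq))) mulnDr muln1.
    by rewrite exprD dE (prim_expr_order zp) mul1r.
  apply/negP => /eqP hq.
  have z0 : z != 0.
    apply/negP => /eqP z0; move: (prim_expr_order zp); rewrite z0 expr0n.
    by rewrite (negbTE (lt0n_neq0 N0)) => /eqP; rewrite eq_sym oner_eq0.
  have : (z ^+ d) ^+ (q - 1) == 1.
    have zd0 : z ^+ d != 0 by rewrite expf_neq0.
    apply/eqP; apply: (mulfI zd0); rewrite mulr1 -exprS subn1 prednK ?hq //.
    by rewrite ltnW.
  rewrite -exprM -(prim_order_dvd zp) => /dvdn_leq.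
  have dp : (0 < d)%N by move: N0; rewrite -dE muln_gt0 => /andP[].
  rewrite muln_gt0 dp subn_gt0 q1 => /(_ isT).
  rewrite -dE leq_mul2l (gtn_eqF dp) /= leqNgt ltn_sub2r //.
  exact: ltn_trans q1 qtq.
apply: injF_bij => x y hxy.
apply/eqP; rewrite -subr_eq0; apply/negP => w0.
set w := x - y in w0.
have hw : qlin_eval q b w = 0 by rewrite hB hxy subrr.
have hlw : qlin_eval q b (l * w) = 0 := semilin hlt ht hw.
have [a [c [ha hc ac0 e]]] : Fq_dependent q w (l * w).
  by apply: sc; rewrite hw hlw !mulr0 subrr.
have e' : a + c * l = 0.
  have : (a + c * l) * w = 0 by rewrite mulrDl -mulrA.
  by move/eqP; rewrite mulf_eq0 (negbTE (introN idP w0)) orbF => /eqP.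
have c0 : c != 0.
  apply/negP => /eqP c0; move: e' ac0; rewrite c0 mul0r addr0 => ->.
  by rewrite eqxx.
have lE : l = - a / c.
  by apply: (mulIf c0); rewrite divfK // mulrC; apply/eqP; rewrite -addr_eq0 addrC e'.
move: hlq; rewrite lE exprMn exprVn.
have := frobN 1%N a; rewrite expn1 => ->.
by rewrite (eqP ha) (eqP hc) eqxx.
Qed.
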